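(* Let $(S,d)$ be a metric space. Then $E^S_\bullet\subset J^S_\bullet$ for $\bullet=\mathrm{BL}$ and for $\bullet=\mathrm{FM}$.
   Context: $\mathrm{BL}(S)$ is the space of bounded real-valued Lipschitz functions on $S$, $|f|_L=\sup_{x\neq y}|f(x)-f(y)|/d(x,y)$ (with $|f|_L=0$ on a singleton), $\|f\|_{\mathrm{BL}}=\|f\|_\infty+|f|_L$, $\|f\|_{\mathrm{FM}}=\max(\|f\|_\infty,|f|_L)$, $B^S_\bullet=\{f\in\mathrm{BL}(S):\|f\|_\bullet\le1\}$. Subsets $P\subset S$ carry the restricted metric; $\operatorname{ext}$ denotes extreme points and $\operatorname{ext}_*(B^P_\bullet)=\operatorname{ext}(B^P_\bullet)\setminus\{f:|f|=\mathbf{1}\}$. $M_f=\{x\in S:|f(x)|=\|f\|_\infty\}$. For non-empty $P\subset S$, $f\in\mathrm{BL}(P)$: $\mathcal{E}^{S,0}_P f(x)=\sup_{p\in P}[f(p)-|f|_L d(p,x)]$, $\mathcal{E}^S_P f=\max(\mathcal{E}^{S,0}_P f,-\|f\|_\infty)$. $E^S_{\mathrm{BL}}=\bigcup_{P\subset S\text{ finite}}\mathcal{E}^S_P(\operatorname{ext}_*(B^P_{\mathrm{BL}}))\cup\{\mathbf{1},-\mathbf{1}\}$; $E^S_{\mathrm{FM}}=\bigcup_{P\subset S\text{ finite}}\mathcal{E}^S_P(\operatorname{ext}_*(B^P_{\mathrm{FM}}))\cup\{f\in B^S_{\mathrm{FM}}:|f|=\mathbf{1}\}\cup\{h_P:P\subset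 S\text{ finite, non-empty}\}$, with $h_P(x)=\max\big(-1,\sup_{p\in P}[1-d(x,p)]\big)$. $J^S_{\mathrm{FM}}$ is the set of $f\in B^S_{\mathrm{FM}}$ with $\|f\|_\infty=1$ for which there is a finite non-empty $P_f\subset S$ such that for every $x\in S\setminus M_f$ there exists $p\in P_f$ with $|f(x)-f(p)|=d(x,p)$. $J^S_{\mathrm{BL}}=\{\mathbf{1},-\mathbf{1}\}\cup\hat J^S_{\mathrm{BL}}$, where $\hat J^S_{\mathrm{BL}}$ is the set of $f\in B^S_{\mathrm{BL}}$ with $\|f\|_{\mathrm{BL}}=1$, $f(M_f)=\{\|f\|_\infty,-\|f\|_\infty\}$, and for which there is a finite non-empty $P_f\subset S$ such that for every $x\in S\setminus M_f$ there exists $p\in P_f$ with $|f(x)-f(p)|=(1-\|f\|_\infty)d(x,p)$. *)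

(* Defs.v *)
From Stdlib Require Import Reals List.
From Coquelicot Require Import Coquelicot.
Open Scope R_scope.

Section BLdefs.
Context {S : Type} (d : S -> S -> R).

Definition is_metric : Prop :=
  (forall x y, 0 <= d x y) /\
  (forall x y, d x y = 0 <-> x = y) /\
  (forall x y, d x y = d y x) /\
  (forall x y z, d x z <= d x y + d y z).

(* A subset A of S (with the restricted metric); a function f : S -> R is
   regarded as a function on A through its values on A. *)
Definition is_BL (A : S -> Prop) (f : S -> R) : Prop :=
  (exists M, forall x, A x -> Rabs (f x) <= M) /\
  (exists L, forall x y, A x -> A y -> Rabs (f x - f y) <= L * d x y).

Definition sup_norm (A : S -> Prop) (f : S -> R) : R :=
  real (Lub_Rbar (fun r => exists x, A x /\ r = Rabs (f x))).

(* |f|_L on A; the empty supremum (A a singleton) gives 0 *)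
Definition lip (A : S -> Prop) (f : S -> R) : R :=
  real (Lub_Rbar (fun r => exists x y, A x /\ A y /\ x <> y /\
                            r = Rabs (f x - f y) / d x y)).

Definition BL_norm A f := sup_norm A f + lip A f.
Definition FM_norm A f := Rmax (sup_norm A f) (lip A f).

Definition ball_BL A f := is_BL A f /\ BL_norm A f <= 1.
Definition ball_FM A f := is_BL A f /\ FM_norm A f <= 1.

Definition extreme (A : S -> Prop) (B : (S -> R) -> Prop) (f : S -> R) : Prop :=
  B f /\
  forall g h t, B g -> B h -> 0 < t < 1 ->
    (forall x, A x -> f x = t * g x + (1 - t) * h x) ->
    forall x, A x -> g x = h x.

Definition inP (P : list S) : S -> Prop := fun x => In x P.

Definition ext_star_BL (P : list S) f :=
  extreme (inP P) (ball_BL (inP P)) f /\ ~ (forall p, In p P -> Rabs (f p) = 1).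
Definition ext_star_FM (P : list S) f :=
  extreme (inP P) (ball_FM (inP P)) f /\ ~ (forall p, In p P -> Rabs (f p) = 1).

Definition ext0 (P : list S) (f : S -> R) (x : S) : R :=
  real (Lub_Rbar (fun r => exists p, In p P /\ r = f p - lip (inP P) f * d p x)).
Definition ext (P : list S) (f : S -> R) (x : S) : R :=
  Rmax (ext0 P f x) (- sup_norm (inP P) f).

Definition whole : S -> Prop := fun _ => True.

Definition hP (P : list S) (x : S) : R :=
  Rmax (-1) (real (Lub_Rbar (fun r => exists p, In p P /\ r = 1 - d x p))).

Definition E_BL (g : S -> R) : Prop :=
  (exists P f, P <> nil /\ ext_star_BL P f /\ forall x, g x = ext P f x) \/
  (forall x, g x = 1) \/ (forall x, g x = -1).

Definition E_FM (g : S -> R) : Prop :=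
  (exists P f, P <> nil /\ ext_star_FM P f /\ forall x, g x = ext P f x) \/
  (ball_FM whole g /\ forall x, Rabs (g x) = 1) \/
  (exists P, P <> nil /\ forall x, g x = hP P x).

Definition Mset (f : S -> R) (x : S) : Prop := Rabs (f x) = sup_norm whole f.

Definition J_FM (f : S -> R) : Prop :=
  ball_FM whole f /\ sup_norm whole f = 1 /\
  exists Pf : list S, Pf <> nil /\
    forall x, ~ Mset f x -> exists p, In p Pf /\ Rabs (f x - f p) = d x p.

Definition hatJ_BL (f : S -> R) : Prop :=
  is_BL whole f /\ BL_norm whole f = 1 /\
  (forall r, (exists x, Mset f x /\ f x = r) <->
             (r = sup_norm whole f \/ r = - sup_norm whole f)) /\
  exists Pf : list S, Pf <> nil /\
    forall x, ~ Mset f x -> exists p, In p Pf /\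
      Rabs (f x - f p) = (1 - sup_norm whole f) * d x p.

Definition J_BL (f : S -> R) : Prop :=
  (forall x, f x = 1) \/ (forall x, f x = -1) \/ hatJ_BL f.

End BLdefs.

(* Main.v *)
Require Import Defs.
From Stdlib Require Import Reals List Lra Psatz Classical FunctionalExtensionality.
From Coquelicot Require Import Coquelicot.
Open Scope R_scope.

Lemma lub_le (E : R -> Prop) (M : R) :
  (forall r, E r -> r <= M) -> 0 <= M -> real (Lub_Rbar E) <= M.
Proof.
  intros H H0. destruct (Lub_Rbar_correct E) as [_ Hl].
  assert (Hb : Rbar_le (Lub_Rbar E) (Finite M)).
  { apply Hl. intros x Ex. simpl. now apply H. }
  destruct (Lub_Rbar E); simpl in *; auto; contradiction.
Qed.

Lemma le_lub (E : R -> Prop) (M r : R) :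
  E r -> (forall r, E r -> r <= M) -> r <= real (Lub_Rbar E).
Proof.
  intros Er H. destruct (Lub_Rbar_correct E) as [Hu Hl].
  assert (Hb : Rbar_le (Lub_Rbar E) (Finite M)).
  { apply Hl. intros x Ex. simpl. now apply H. }
  specialize (Hu r Er).
  destruct (Lub_Rbar E); simpl in *; auto; contradiction.
Qed.

Lemma lub_ge0 (E : R -> Prop) :
  (forall r, E r -> 0 <= r) -> 0 <= real (Lub_Rbar E).
Proof.
  intros H. destruct (Lub_Rbar_correct E) as [Hu Hl].
  destruct (classic (exists r, E r)) as [[r Er]|Hn].
  - specialize (Hu r Er). specialize (H r Er).
    destruct (Lub_Rbar E); simpl in *; lra.
  - assert (Hb : Rbar_le (Lub_Rbar E) m_infty).
    { apply Hl. intros x Ex. exfalso. apply Hn. eauto. }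
    destruct (Lub_Rbar E); simpl in *; try contradiction; lra.
Qed.

Lemma lub_mono (E1 E2 : R -> Prop) (M : R) :
  (forall r, E1 r -> E2 r) -> (forall r, E2 r -> r <= M) ->
  (forall r, E2 r -> 0 <= r) -> real (Lub_Rbar E1) <= real (Lub_Rbar E2).
Proof.
  intros H12 HM H0. apply lub_le.
  - intros r Er. eapply le_lub; eauto.
  - now apply lub_ge0.
Qed.

Lemma lub_list_max {S : Type} (P : list S) (phi : S -> R) :
  P <> nil -> exists p0, In p0 P /\
    real (Lub_Rbar (fun r => exists p, In p P /\ r = phi p)) = phi p0 /\
    forall p, In p P -> phi p <= phi p0.
Proof.
  intros HP.
  assert (Hm : exists p0, In p0 P /\ forall p, In p P -> phi p <= phi p0).
  { induction P as [|a P IH]; [contradiction|].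
    destruct P as [|b P'].
      + exists a. split; [now left|]. intros p [<-|[]]; lra.
      + destruct IH as [p1 [H1 H2]]; [discriminate|].
        destruct (Rle_dec (phi a) (phi p1)).
        * exists p1. split; [now right|]. intros p [<-|Hp]; auto.
        * exists a. split; [now left|]. intros p [<-|Hp]; [lra|].
          specialize (H2 p Hp). lra. }
  destruct Hm as [p0 [H1 H2]]. exists p0. split; [auto|]. split; [|auto].
  rewrite (is_lub_Rbar_unique _ (Finite (phi p0))); [reflexivity|].
  split.
  - intros r [p [Hp ->]]. simpl. auto.
  - intros b Hb. apply Hb. eauto.
Qed.

Lemma metric_pos {S : Type} (d : S -> S -> R) (Hd : is_metric d) x y :
  x <> y -> 0 < d x y.
Proof.
  destruct Hd as [H0 [H1 _]]. intros Hxy.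
  destruct (H0 x y) as [|E]; auto. exfalso. apply Hxy. now apply H1.
Qed.

Lemma metric_refl {S : Type} (d : S -> S -> R) (Hd : is_metric d) x : d x x = 0.
Proof. destruct Hd as [_ [H1 _]]. now apply H1. Qed.

Lemma lip_spec {S : Type} (d : S -> S -> R) (Hd : is_metric d) A f :
  is_BL d A f -> forall x y, A x -> A y -> Rabs (f x - f y) <= lip d A f * d x y.
Proof.
  intros [_ [L HL]] x y Ax Ay.
  destruct (classic (x = y)) as [<-|Hxy].
  - rewrite (metric_refl d Hd), Rminus_diag, Rabs_R0, Rmult_0_r. lra.
  - pose proof (metric_pos d Hd x y Hxy) as Hp.
    assert (Hr : Rabs (f x - f y) / d x y <= lip d A f).
    { unfold lip. eapply le_lub with (M := L).
      - exists x, y. auto.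
      - intros r (x' & y' & Ax' & Ay' & Hne & ->).
        pose proof (metric_pos d Hd x' y' Hne).
        specialize (HL x' y' Ax' Ay').
        apply Rmult_le_reg_r with (d x' y'); auto.
        unfold Rdiv. rewrite Rmult_assoc, Rinv_l; lra. }
    apply Rmult_le_reg_r with (/ d x y). apply Rinv_0_lt_compat; auto.
    rewrite Rmult_assoc, Rinv_r; lra.
Qed.

Lemma lip_ge0 {S : Type} (d : S -> S -> R) (Hd : is_metric d) A f : 0 <= lip d A f.
Proof.
  unfold lip. apply lub_ge0. intros r (x & y & _ & _ & Hne & ->).
  pose proof (metric_pos d Hd x y Hne).
  apply Rdiv_le_0_compat; auto. apply Rabs_pos.
Qed.

Lemma lip_le {S : Type} (d : S -> S -> R) (Hd : is_metric d) A f K :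
  (forall x y, A x -> A y -> x <> y -> Rabs (f x - f y) <= K * d x y) -> 0 <= K ->
  lip d A f <= K.
Proof.
  intros H HK. unfold lip. apply lub_le; auto.
  intros r (x & y & Ax & Ay & Hne & ->).
  pose proof (metric_pos d Hd x y Hne). specialize (H x y Ax Ay Hne).
  apply Rmult_le_reg_r with (d x y); auto.
  unfold Rdiv. rewrite Rmult_assoc, Rinv_l; lra.
Qed.

Lemma sup_spec {S : Type} (d : S -> S -> R) A f :
  is_BL d A f -> forall x, A x -> Rabs (f x) <= sup_norm A f.
Proof.
  intros [[M HM] _] x Ax. unfold sup_norm. eapply le_lub with (M := M).
  - eauto.
  - intros r (y & Ay & ->). auto.
Qed.

Lemma sup_ge0 {S : Type} A (f : S -> R) : 0 <= sup_norm A f.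
Proof.
  unfold sup_norm. apply lub_ge0. intros r (x & _ & ->). apply Rabs_pos.
Qed.

Lemma sup_le {S : Type} A (f : S -> R) M :
  (forall x, A x -> Rabs (f x) <= M) -> 0 <= M -> sup_norm A f <= M.
Proof.
  intros H HM. unfold sup_norm. apply lub_le; auto.
  intros r (x & Ax & ->). auto.
Qed.

Fixpoint sumP {S : Type} (P : list S) (phi : S -> R) : R :=
  match P with nil => 0 | p :: P' => Rabs (phi p) + sumP P' phi end.

Lemma sumP_ge {S : Type} (P : list S) phi p : In p P -> Rabs (phi p) <= sumP P phi.
Proof.
  induction P as [|a P IH]; simpl; [tauto|].
  assert (forall Q, 0 <= sumP Q phi).
  { induction Q; simpl; [lra|]. pose proof (Rabs_pos (phi a0)). lra. }
  intros [<-|Hp]. - specialize (H P). lra.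
  - specialize (IH Hp). pose proof (Rabs_pos (phi a)). lra.
Qed.

Lemma is_BL_list {S : Type} (d : S -> S -> R) (Hd : is_metric d) (P : list S) f :
  is_BL d (inP P) f.
Proof.
  split.
  - exists (sumP P f). intros x Hx. now apply sumP_ge.
  - exists (sumP P (fun p => sumP P (fun q => Rabs (f p - f q) / d p q))).
    intros x y Hx Hy. destruct (classic (x = y)) as [<-|Hxy].
    + rewrite (metric_refl d Hd), Rminus_diag, Rabs_R0, Rmult_0_r. lra.
    + pose proof (metric_pos d Hd x y Hxy).
      pose proof (sumP_ge P (fun q => Rabs (f x - f q) / d x q) y Hy) as H1.
      pose proof (sumP_ge P (fun p => sumP P (fun q => Rabs (f p - f q) / d p q)) x Hx) as H2.
      simpl in H1, H2.
      pose proof (Rle_abs (sumP P (fun q => Rabs (f x - f q) / d x q))).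
      pose proof (Rle_abs (Rabs (f x - f y) / d x y)).
      assert (Heq : Rabs (f x - f y) = Rabs (f x - f y) / d x y * d x y).
      { field. lra. }
      rewrite Heq. apply Rmult_le_compat_r; lra.
Qed.

Lemma min_pos {S : Type} (P : list S) (phi : S -> R) :
  (forall p, In p P -> 0 < phi p) -> exists e, 0 < e /\ forall p, In p P -> e <= phi p.
Proof.
  induction P as [|a P IH]; intros H.
  - exists 1. split; [lra|]. intros p [].
  - destruct IH as [e [He He']]. { intros p Hp. apply H. now right. }
    exists (Rmin e (phi a)). split.
    + apply Rmin_glb_lt; auto. apply H. now left.
    + intros p [<-|Hp]. apply Rmin_r. eapply Rle_trans; [apply Rmin_l|]. auto.
Qed.

Lemma min_pos2 {S : Type} (P : list S) (phi : S -> S -> R) :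
  (forall p q, In p P -> In q P -> 0 < phi p q) ->
  exists e, 0 < e /\ forall p q, In p P -> In q P -> e <= phi p q.
Proof.
  induction P as [|a P IH]; intros H.
  - exists 1. split; [lra|]. intros p q [].
  - destruct IH as [e [He He']]. { intros p q Hp Hq. apply H; now right. }
    destruct (min_pos (a :: P) (fun q => Rmin (phi a q) (phi q a))) as [e2 [He2 He2']].
    { intros q Hq. apply Rmin_glb_lt; apply H; simpl; auto. }
    exists (Rmin e e2). split. { now apply Rmin_glb_lt. }
    intros p q Hp Hq.
    destruct Hp as [<-|Hp].
    + eapply Rle_trans; [apply Rmin_r|].
      apply Rle_trans with (Rmin (phi a q) (phi q a)); [apply He2'; auto|apply Rmin_l].
    + destruct Hq as [<-|Hq].
      * eapply Rle_trans; [apply Rmin_r|].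
        apply Rle_trans with (Rmin (phi a p) (phi p a)); [apply He2'; simpl; auto|apply Rmin_r].
      * eapply Rle_trans; [apply Rmin_l|]. auto.
Qed.

Lemma ext0_max {S : Type} (d : S -> S -> R) P f x : P <> nil ->
  exists p0, In p0 P /\ ext0 d P f x = f p0 - lip d (inP P) f * d p0 x /\
    forall p, In p P -> f p - lip d (inP P) f * d p x <= ext0 d P f x.
Proof.
  intros HP. destruct (lub_list_max P (fun p => f p - lip d (inP P) f * d p x) HP)
    as [p0 [H1 [H2 H3]]].
  exists p0. unfold ext0. rewrite H2. auto.
Qed.

Lemma Rmax_lip a b c : Rabs (Rmax a c - Rmax b c) <= Rabs (a - b).
Proof.
  unfold Rmax. destruct (Rle_dec a c), (Rle_dec b c); unfold Rabs;
  repeat destruct Rcase_abs; lra.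
Qed.

Lemma ext_props {S : Type} (d : S -> S -> R) (Hd : is_metric d) P f :
  P <> nil -> is_BL d (inP P) f ->
  (forall p, In p P -> ext d P f p = f p) /\
  (forall x, - sup_norm (inP P) f <= ext d P f x <= sup_norm (inP P) f) /\
  (forall x y, Rabs (ext d P f x - ext d P f y) <= lip d (inP P) f * d x y) /\
  (forall x, - sup_norm (inP P) f < ext d P f x ->
     exists p0, In p0 P /\ ext d P f x = f p0 - lip d (inP P) f * d p0 x).
Proof.
  intros HP HBL.
  pose proof (lip_ge0 d Hd (inP P) f) as HL0.
  pose proof (sup_ge0 (inP P) f) as Ha0.
  pose proof (lip_spec d Hd _ _ HBL) as Hlip.
  pose proof (sup_spec d _ _ HBL) as Hsup.
  destruct Hd as [Hd0 [Hd1 [Hds Hdt]]].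
  set (L := lip d (inP P) f) in *. set (a := sup_norm (inP P) f) in *.
  split; [|split; [|split]].
  - intros p Hp. unfold ext; fold a L.
    destruct (ext0_max d P f p HP) as [p0 [Hp0 [E1 E2]]]. fold L in E1, E2.
    assert (Hpp : ext0 d P f p = f p).
    { apply Rle_antisym.
      - rewrite E1. specialize (Hlip p0 p Hp0 Hp). unfold Rabs in Hlip.
        destruct Rcase_abs in Hlip; lra.
      - specialize (E2 p Hp). rewrite (proj2 (Hd1 p p) eq_refl) in E2. lra. }
    rewrite Hpp. apply Rmax_left. specialize (Hsup p Hp).
    unfold Rabs in Hsup. destruct Rcase_abs in Hsup; lra.
  - intros x. unfold ext; fold a L. split; [apply Rmax_r|].
    apply Rmax_lub; [|lra].
    destruct (ext0_max d P f x HP) as [p0 [Hp0 [E1 E2]]]. fold L in E1, E2.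
    rewrite E1. specialize (Hsup p0 Hp0). specialize (Hd0 p0 x).
    pose proof (Rmult_le_pos _ _ HL0 Hd0). pose proof (Rle_abs (f p0)). lra.
  - intros x y. unfold ext; fold a L. eapply Rle_trans; [apply Rmax_lip|].
    destruct (ext0_max d P f x HP) as [p0 [Hp0 [E1 E2]]]. fold L in E1, E2.
    destruct (ext0_max d P f y HP) as [q0 [Hq0 [F1 F2]]]. fold L in F1, F2.
    specialize (E2 q0 Hq0). specialize (F2 p0 Hp0).
    pose proof (Hdt p0 x y). pose proof (Hdt q0 y x). rewrite (Hds y x) in *.
    pose proof (Rmult_le_compat_l L _ _ HL0 H).
    pose proof (Rmult_le_compat_l L _ _ HL0 H0).
    unfold Rabs. destruct Rcase_abs; lra.
  - intros x Hx. unfold ext in *; fold a L in Hx |- *.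
    destruct (ext0_max d P f x HP) as [p0 [Hp0 [E1 E2]]]. fold L in E1, E2.
    exists p0. split; auto. rewrite <- E1.
    unfold Rmax in *. destruct Rle_dec; lra.
Qed.

Lemma ext_whole {S : Type} (d : S -> S -> R) (Hd : is_metric d) P f :
  P <> nil -> is_BL d (inP P) f ->
  is_BL d whole (ext d P f) /\ sup_norm whole (ext d P f) = sup_norm (inP P) f /\
  lip d whole (ext d P f) = lip d (inP P) f.
Proof.
  intros HP HBL.
  destruct (ext_props d Hd P f HP HBL) as [G1 [G2 [G3 G4]]].
  pose proof (lip_ge0 d Hd (inP P) f) as HL0.
  pose proof (sup_ge0 (inP P) f) as Ha0.
  assert (Hb : forall x, Rabs (ext d P f x) <= sup_norm (inP P) f).
  { intros x. specialize (G2 x). unfold Rabs. destruct Rcase_abs; lra. }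
  split; [|split].
  - split; [exists (sup_norm (inP P) f); auto|]. exists (lip d (inP P) f); auto.
  - apply Rle_antisym.
    + apply sup_le; auto.
    + unfold sup_norm at 2. apply lub_mono with (M := sup_norm (inP P) f).
      * intros r (x & Hx & ->). exists x. split; [exact I|]. now rewrite G1.
      * intros r (x & _ & ->). auto.
      * intros r (x & _ & ->). apply Rabs_pos.
  - apply Rle_antisym.
    + apply lip_le; auto.
    + unfold lip at 2. apply lub_mono with (M := lip d (inP P) f).
      * intros r (x & y & Hx & Hy & Hne & ->). exists x, y.
        repeat split; auto. now rewrite G1, G1.
      * intros r (x & y & _ & _ & Hne & ->).
        pose proof (metric_pos d Hd x y Hne). specialize (G3 x y).
        apply Rmult_le_reg_r with (d x y); auto.
        unfold Rdiv. rewrite Rmult_assoc, Rinv_l; lra.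
      * intros r (x & y & _ & _ & Hne & ->).
        pose proof (metric_pos d Hd x y Hne).
        apply Rdiv_le_0_compat; auto. apply Rabs_pos.
Qed.

Lemma extreme_pert {S : Type} (A : S -> Prop) B f g h :
  extreme A B f -> B g -> B h -> (forall x, A x -> f x = (g x + h x) / 2) ->
  forall x, A x -> g x = h x.
Proof.
  intros [_ He] Bg Bh Hf. apply (He g h (1/2)); auto. lra.
  intros x Ax. rewrite Hf; auto. lra.
Qed.

Lemma ball_nonempty {S : Type} (P : list S) : P <> nil -> exists p, In p P.
Proof. destruct P as [|p P]; [tauto|]. exists p. now left. Qed.

Lemma const_shift_ball {S : Type} (d : S -> S -> R) (Hd : is_metric d) P f e s :
  is_BL d (inP P) f -> 0 <= e -> (s = 1 \/ s = -1) ->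
  sup_norm (inP P) (fun x => f x + s * e) <= sup_norm (inP P) f + e /\
  lip d (inP P) (fun x => f x + s * e) <= lip d (inP P) f.
Proof.
  intros HBL He Hs. split.
  - apply sup_le.
    + intros x Hx. eapply Rle_trans; [apply Rabs_triang|].
      pose proof (sup_spec d _ _ HBL x Hx).
      assert (Rabs (s * e) = e) by (destruct Hs as [-> | ->]; unfold Rabs; destruct Rcase_abs; lra).
      lra.
    + pose proof (sup_ge0 (inP P) f). lra.
  - apply lip_le; auto. 2: apply (lip_ge0 d Hd).
    intros x y Hx Hy _. replace (f x + s * e - (f y + s * e)) with (f x - f y) by ring.
    now apply (lip_spec d Hd).
Qed.

Lemma FM_facts {S : Type} (d : S -> S -> R) (Hd : is_metric d) P f :
  P <> nil -> ext_star_FM d P f ->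
  sup_norm (inP P) f = 1 /\ lip d (inP P) f = 1.
Proof.
  intros HP [Hext Hnot].
  pose proof Hext as [[HBL Hn] _]. unfold FM_norm in Hn.
  pose proof (Rmax_l (sup_norm (inP P) f) (lip d (inP P) f)) as Ha1.
  pose proof (Rmax_r (sup_norm (inP P) f) (lip d (inP P) f)) as HL1.
  pose proof (lip_ge0 d Hd (inP P) f) as HL0.
  pose proof (sup_ge0 (inP P) f) as Ha0.
  destruct (ball_nonempty P HP) as [p0 Hp0].
  assert (Ha : sup_norm (inP P) f = 1).
  { destruct (Rle_lt_or_eq_dec (sup_norm (inP P) f) 1) as [Hlt|]; [lra| |auto].
    exfalso. set (e := 1 - sup_norm (inP P) f).
    assert (Hb : forall s, s = 1 \/ s = -1 -> ball_FM d (inP P) (fun x => f x + s * e)).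
    { intros s Hs. split; [apply (is_BL_list d Hd)|].
      destruct (const_shift_ball d Hd P f e s HBL) as [H1 H2]; auto; [unfold e; lra|].
      unfold FM_norm. apply Rmax_lub; unfold e in *; lra. }
    pose proof (extreme_pert _ _ _ _ _ Hext (Hb 1 (or_introl eq_refl))
       (Hb (-1) (or_intror eq_refl))) as Hq.
    assert (Hq' : f p0 + 1 * e = f p0 + -1 * e).
    { apply Hq; [|exact Hp0]. intros x _. field. } unfold e in Hq'. lra. }
  split; auto.
  destruct (Rle_lt_or_eq_dec (lip d (inP P) f) 1) as [Hlt|]; [lra| |auto].
  exfalso.
  set (L := lip d (inP P) f) in *.
  destruct (not_all_ex_not _ _ Hnot) as [q Hq].
  assert (Hq1 : In q P /\ Rabs (f q) <> 1) by tauto. clear Hq. destruct Hq1 as [HqP Hq].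
  set (u := fun x => if Req_dec_T (Rabs (f x)) 1 then 0 else 1).
  destruct (min_pos2 P (fun p q => Rmin (if Req_dec_T (Rabs (f p)) 1 then 1 else 1 - Rabs (f p))
               (if Rlt_dec 0 (d p q) then (1 - L) * d p q else 1))) as [e [He He']].
  { intros p p' Hp Hp'. apply Rmin_glb_lt.
    - destruct Req_dec_T; [lra|]. pose proof (sup_spec d _ _ HBL p Hp). 
      rewrite Ha in H. destruct (Rle_lt_or_eq_dec _ _ H); [lra|tauto].
    - destruct Rlt_dec; [|lra]. apply Rmult_lt_0_compat; lra. }
  assert (Hb : forall s, s = 1 \/ s = -1 -> ball_FM d (inP P) (fun x => f x + s * (e * u x))).
  { intros s Hs. split; [apply (is_BL_list d Hd)|]. unfold FM_norm. apply Rmax_lub.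
    - apply sup_le; [|lra]. intros x Hx. specialize (He' x x Hx Hx).
      pose proof (Rmin_l (if Req_dec_T (Rabs (f x)) 1 then 1 else 1 - Rabs (f x))
               (if Rlt_dec 0 (d x x) then (1 - L) * d x x else 1)).
      unfold u. destruct Req_dec_T.
      + rewrite Rmult_0_r, Rmult_0_r, Rplus_0_r. lra.
      + eapply Rle_trans; [apply Rabs_triang|].
        assert (Rabs (s * (e * 1)) = e) by (destruct Hs as [-> | ->]; unfold Rabs; destruct Rcase_abs; lra).
        lra.
    - apply lip_le; [auto| |lra]. intros x y Hx Hy Hne.
      pose proof (metric_pos d Hd x y Hne) as Hdp.
      specialize (He' x y Hx Hy).
      pose proof (Rmin_r (if Req_dec_T (Rabs (f x)) 1 then 1 else 1 - Rabs (f x))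
               (if Rlt_dec 0 (d x y) then (1 - L) * d x y else 1)).
      destruct Rlt_dec as [_|]; [|lra].
      pose proof (lip_spec d Hd _ _ HBL x y Hx Hy) as Hl. fold L in Hl.
      replace (f x + s * (e * u x) - (f y + s * (e * u y))) with
        ((f x - f y) + s * e * (u x - u y)) by ring.
      eapply Rle_trans; [apply Rabs_triang|].
      assert (Rabs (s * e * (u x - u y)) <= e).
      { rewrite !Rabs_mult. rewrite (Rabs_right e) by lra.
        assert (Rabs s = 1) by (destruct Hs as [-> | ->]; unfold Rabs; destruct Rcase_abs; lra).
        assert (Rabs (u x - u y) <= 1) by (unfold u; repeat destruct Req_dec_T; unfold Rabs; destruct Rcase_abs; lra).
        match goal with H : Rabs s = 1 |- _ => rewrite H end.
        pose proof (Rabs_pos (u x - u y)). nra. }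
      lra. }
  pose proof (extreme_pert _ _ _ _ _ Hext (Hb 1 (or_introl eq_refl))
       (Hb (-1) (or_intror eq_refl))) as Hq'.
  assert (Hq'' : f q + 1 * (e * u q) = f q + -1 * (e * u q)).
  { apply Hq'; [|exact HqP]. intros x _. field. }
  unfold u in Hq''. destruct Req_dec_T; [tauto|]. lra.
Qed.

Lemma aux_bound (a v s t sg fx : R) : sg * sg = 1 -> fx = sg * v -> -a <= v ->
  2 * t <= a - v -> -t <= s <= t -> t <= 1/2 ->
  Rabs ((1 + s) * fx + sg * s) <= (1 + s) * a - s.
Proof.
  intros Hs Hf Hv Ht Hst Ht2.
  replace ((1 + s) * fx + sg * s) with (sg * ((1 + s) * v + s)) by (rewrite Hf; ring).
  rewrite Rabs_mult.
  assert (Rabs sg = 1).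
  { assert (Rabs sg * Rabs sg = 1) by (rewrite <- Rabs_mult, Hs; apply Rabs_R1).
    pose proof (Rabs_pos sg). nra. }
  rewrite H, Rmult_1_l. apply Rabs_le. split.
  - nra.
  - destruct (Rle_dec s 0); nra.
Qed.

Lemma BL_facts {S : Type} (d : S -> S -> R) (Hd : is_metric d) P f :
  P <> nil -> ext_star_BL d P f ->
  sup_norm (inP P) f + lip d (inP P) f = 1 /\
  forall sg, sg = 1 \/ sg = -1 -> exists p, In p P /\ f p = sg * sup_norm (inP P) f.
Proof.
  intros HP [Hext Hnot].
  pose proof Hext as [[HBL Hn] _]. unfold BL_norm in Hn.
  pose proof (lip_ge0 d Hd (inP P) f) as HL0.
  pose proof (sup_ge0 (inP P) f) as Ha0.
  destruct (ball_nonempty P HP) as [p0 Hp0].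
  set (a := sup_norm (inP P) f) in *. set (L := lip d (inP P) f) in *.
  assert (HN : a + L = 1).
  { destruct (Rle_lt_or_eq_dec (a + L) 1) as [Hlt|]; [lra| |auto].
    exfalso. set (e := 1 - (a + L)).
    assert (Hb : forall s, s = 1 \/ s = -1 -> ball_BL d (inP P) (fun x => f x + s * e)).
    { intros s Hs. split; [apply (is_BL_list d Hd)|].
      destruct (const_shift_ball d Hd P f e s HBL) as [H1 H2]; auto; [unfold e; lra|].
      unfold BL_norm. fold a L in H1, H2. unfold e in *; lra. }
    pose proof (extreme_pert _ _ _ _ _ Hext (Hb 1 (or_introl eq_refl))
       (Hb (-1) (or_intror eq_refl))) as Hq.
    assert (Hq' : f p0 + 1 * e = f p0 + -1 * e).
    { apply Hq; [|exact Hp0]. intros x _. field. }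
    unfold e in Hq'. lra. }
  split; auto.
  intros sg Hsg. apply NNPP. intros Hno.
  assert (Hsg2 : sg * sg = 1) by (destruct Hsg as [-> | ->]; ring).
  assert (Hlt : forall p, In p P -> sg * f p < a).
  { intros p Hp. pose proof (sup_spec d _ _ HBL p Hp). fold a in H.
    assert (sg * f p <= a).
    { eapply Rle_trans; [apply Rle_abs|]. rewrite Rabs_mult.
      destruct Hsg as [-> | ->]; unfold Rabs at 1; destruct Rcase_abs; lra. }
    destruct (Rle_lt_or_eq_dec _ _ H0); auto. exfalso. apply Hno. exists p. split; auto.
    rewrite <- e. replace (sg * (sg * f p)) with ((sg * sg) * f p) by ring. rewrite Hsg2. ring. }
  destruct (min_pos P (fun p => Rmin (1/2) ((a - sg * f p) / 2))) as [t [Ht Ht']].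
  { intros p Hp. apply Rmin_glb_lt; [lra|]. specialize (Hlt p Hp). lra. }
  assert (Ht2 : t <= 1/2).
  { eapply Rle_trans; [apply (Ht' p0 Hp0)|]. apply Rmin_l. }
  assert (Hb : forall s, s = 1 \/ s = -1 ->
     ball_BL d (inP P) (fun x => f x + s * (t * (f x + sg)))).
  { intros s Hs. split; [apply (is_BL_list d Hd)|].
    assert (Hst : - t <= s * t <= t) by (destruct Hs as [-> | ->]; lra).
    assert (Hk : forall x, Rabs (f x + s * (t * (f x + sg))) <= (1 + s * t) * a - s * t
                  -> True) by auto.
    assert (Hbd : forall x, inP P x -> Rabs (f x + s * (t * (f x + sg))) <= (1 + s * t) * a - s * t).
    { intros x Hx.
      replace (f x + s * (t * (f x + sg))) with ((1 + s * t) * f x + sg * (s * t)) by ring.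
      specialize (Ht' x Hx).
      pose proof (Rmin_l (1/2) ((a - sg * f x) / 2)).
      pose proof (Rmin_r (1/2) ((a - sg * f x) / 2)).
      pose proof (sup_spec d _ _ HBL x Hx). fold a in H1.
      apply aux_bound with (v := sg * f x) (t := t); auto; try lra.
      - replace (sg * (sg * f x)) with ((sg * sg) * f x) by ring. rewrite Hsg2. ring.
      - assert (Rabs (sg * f x) <= a).
        { rewrite Rabs_mult. destruct Hsg as [-> | ->]; unfold Rabs at 1; destruct Rcase_abs; lra. }
        pose proof (proj1 (Rabs_le_between _ _) H2). lra. }
    unfold BL_norm.
    assert (H1 : sup_norm (inP P) (fun x => f x + s * (t * (f x + sg))) <= (1 + s * t) * a - s * t).
    { apply sup_le; auto. pose proof (Hbd p0 Hp0). pose proof (Rabs_pos (f p0 + s * (t * (f p0 + sg)))). lra. }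
    assert (H2 : lip d (inP P) (fun x => f x + s * (t * (f x + sg))) <= (1 + s * t) * L).
    { apply lip_le; auto; [|apply Rmult_le_pos; lra]. intros x y Hx Hy _.
      replace (f x + s * (t * (f x + sg)) - (f y + s * (t * (f y + sg)))) with
         ((1 + s * t) * (f x - f y)) by ring.
      rewrite Rabs_mult, (Rabs_right (1 + s * t)) by lra.
      pose proof (lip_spec d Hd _ _ HBL x y Hx Hy). fold L in H.
      rewrite Rmult_assoc. apply Rmult_le_compat_l; lra. }
    replace 1 with ((1 + s * t) * a - s * t + (1 + s * t) * L) by nra. lra. }
  pose proof (extreme_pert _ _ _ _ _ Hext (Hb 1 (or_introl eq_refl))
       (Hb (-1) (or_intror eq_refl))) as Hq.
  apply Hnot. intros p Hp.
  assert (Hq' : f p + 1 * (t * (f p + sg)) = f p + -1 * (t * (f p + sg))).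
  { apply Hq; [|exact Hp]. intros x _. field. }
  assert (f p = - sg) by nra.
  rewrite H. destruct Hsg as [-> | ->]; unfold Rabs; destruct Rcase_abs; lra.
Qed.

Lemma hP_J {S : Type} (d : S -> S -> R) (Hd : is_metric d) P :
  P <> nil -> J_FM d (hP d P).
Proof.
  intros HP.
  pose proof Hd as [Hd0 [Hd1 [Hds Hdt]]].
  assert (Hm : forall x, exists p0, In p0 P /\
     real (Lub_Rbar (fun r => exists p, In p P /\ r = 1 - d x p)) = 1 - d x p0 /\
     forall p, In p P -> 1 - d x p <= 1 - d x p0).
  { intros x. apply (lub_list_max P (fun p => 1 - d x p) HP). }
  assert (H1 : forall p, In p P -> hP d P p = 1).
  { intros p Hp. unfold hP. destruct (Hm p) as [p0 [_ [E1 E2]]]. rewrite E1.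
    specialize (E2 p Hp). rewrite (proj2 (Hd1 p p) eq_refl) in E2.
    specialize (Hd0 p p0). replace (1 - d p p0) with 1 by lra. apply Rmax_right. lra. }
  assert (H2 : forall x, -1 <= hP d P x <= 1).
  { intros x. unfold hP. destruct (Hm x) as [p0 [_ [E1 E2]]]. rewrite E1.
    split; [apply Rmax_l|]. apply Rmax_lub; [lra|]. specialize (Hd0 x p0). lra. }
  assert (H3 : forall x y, Rabs (hP d P x - hP d P y) <= 1 * d x y).
  { intros x y. unfold hP. rewrite (Rmax_comm (-1)), (Rmax_comm (-1)).
    eapply Rle_trans; [apply Rmax_lip|].
    destruct (Hm x) as [p0 [Hp0 [E1 E2]]]. destruct (Hm y) as [q0 [Hq0 [F1 F2]]].
    rewrite E1, F1. specialize (E2 q0 Hq0). specialize (F2 p0 Hp0).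
    pose proof (Hdt y x p0). pose proof (Hdt x y q0). rewrite (Hds y x) in *.
    unfold Rabs. destruct Rcase_abs; lra. }
  assert (H4 : forall x, -1 < hP d P x -> exists p0, In p0 P /\ hP d P x = 1 - d x p0).
  { intros x Hx. unfold hP in *. destruct (Hm x) as [p0 [Hp0 [E1 E2]]]. rewrite E1 in *.
    exists p0. split; auto. unfold Rmax in *. destruct Rle_dec; lra. }
  destruct (ball_nonempty P HP) as [p0 Hp0].
  assert (Hb : forall x, Rabs (hP d P x) <= 1).
  { intros x. specialize (H2 x). unfold Rabs. destruct Rcase_abs; lra. }
  assert (Hsup : sup_norm whole (hP d P) = 1).
  { apply Rle_antisym. apply sup_le; auto; lra.
    unfold sup_norm. eapply le_lub with (M := 1).
    - exists p0. split; [exact I|]. rewrite H1; auto. rewrite Rabs_R1. auto.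
    - intros r (x & _ & ->). auto. }
  split; [|split; auto].
  - split.
    + split; [exists 1; auto|]. exists 1. auto.
    + unfold FM_norm. apply Rmax_lub; [lra|]. apply lip_le; auto. lra.
  - exists P. split; auto. intros x Hx. unfold Mset in Hx. rewrite Hsup in Hx.
    assert (-1 < hP d P x).
    { destruct (H2 x) as [[|E] _]; auto. exfalso. apply Hx. rewrite <- E.
      unfold Rabs; destruct Rcase_abs; lra. }
    destruct (H4 x H) as [q [Hq E]]. exists q. split; auto.
    rewrite E, H1 by auto. replace (1 - d x q - 1) with (- d x q) by ring.
    rewrite Rabs_Ropp, Rabs_right; auto. apply Rle_ge. auto.
Qed.

Theorem proposition5p1 (S : Type) (d : S -> S -> R) (Hd : is_metric d)
  (HS : inhabited S) :
  (forall g : S -> R, E_BL d g -> J_BL d g) /\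
  (forall g : S -> R, E_FM d g -> J_FM d g).
Proof.
  pose proof Hd as [Hd0 [Hd1 [Hds Hdt]]].
  split.
  - intros g [[P [f [HP [Hst Hg]]]] | [H1 | H1]]; [|left; auto|right; left; auto].
    right; right.
    assert (Eg : g = ext d P f) by (apply functional_extensionality; auto).
    subst g.
    assert (HBL : is_BL d (inP P) f) by (apply (is_BL_list d Hd)).
    destruct (BL_facts d Hd P f HP Hst) as [HN Hpm].
    destruct (ext_whole d Hd P f HP HBL) as [HBLg [Hsupg Hlipg]].
    destruct (ext_props d Hd P f HP HBL) as [G1 [G2 [G3 G4]]].
    pose proof (sup_ge0 (inP P) f) as Ha0.
    split; [auto|]. split; [unfold BL_norm; rewrite Hsupg, Hlipg; auto|]. split.
    + intros r. rewrite Hsupg. unfold Mset. rewrite Hsupg. split.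
      * intros (x & Hx & <-). unfold Rabs in Hx. destruct Rcase_abs in Hx; [right|left]; lra.
      * intros [-> | ->].
        -- destruct (Hpm 1 (or_introl eq_refl)) as [p [Hp E]].
           exists p. rewrite G1 by auto. rewrite E. split; [|ring].
           rewrite Rmult_1_l. now apply Rabs_right, Rle_ge.
        -- destruct (Hpm (-1) (or_intror eq_refl)) as [p [Hp E]].
           exists p. rewrite G1 by auto. rewrite E. split; [|ring].
           replace (-1 * sup_norm (inP P) f) with (- sup_norm (inP P) f) by ring.
           rewrite Rabs_Ropp. now apply Rabs_right, Rle_ge.
    + exists P. split; auto. intros x Hx. unfold Mset in Hx. rewrite Hsupg in *.
      assert (Hlt : - sup_norm (inP P) f < ext d P f x).
      { destruct (G2 x) as [[|E] _]; auto. exfalso. apply Hx. rewrite <- E.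
        rewrite Rabs_Ropp. now apply Rabs_right, Rle_ge. }
      destruct (G4 x Hlt) as [p [Hp E]]. exists p. split; auto.
      rewrite E, G1 by auto.
      replace (f p - lip d (inP P) f * d p x - f p) with (- (lip d (inP P) f * d p x)) by ring.
      rewrite Rabs_Ropp, Rabs_right, Hds.
      replace (lip d (inP P) f) with (1 - sup_norm (inP P) f) by lra. reflexivity.
      apply Rle_ge, Rmult_le_pos; [apply (lip_ge0 d Hd)|auto].
  - intros g [[P [f [HP [Hst Hg]]]] | [[Hb H1] | [P [HP Hg]]]].
    + assert (Eg : g = ext d P f) by (apply functional_extensionality; auto).
      subst g.
      assert (HBL : is_BL d (inP P) f) by (apply (is_BL_list d Hd)).
      destruct (FM_facts d Hd P f HP Hst) as [Ha HL].
      destruct (ext_whole d Hd P f HP HBL) as [HBLg [Hsupg Hlipg]].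
      destruct (ext_props d Hd P f HP HBL) as [G1 [G2 [G3 G4]]].
      split; [|split; [congruence|]].
      * split; auto. unfold FM_norm. rewrite Hsupg, Hlipg, Ha, HL. apply Rmax_lub; lra.
      * exists P. split; auto. intros x Hx. unfold Mset in Hx. rewrite Hsupg, Ha in *.
        assert (Hlt : - 1 < ext d P f x).
        { destruct (G2 x) as [[|E] _]; auto. exfalso. apply Hx. rewrite <- E.
          unfold Rabs; destruct Rcase_abs; lra. }
        destruct (G4 x Hlt) as [p [Hp E]]. exists p. split; auto.
        rewrite E, G1 by auto. rewrite HL.
        replace (f p - 1 * d p x - f p) with (- d p x) by ring.
        rewrite Rabs_Ropp, Rabs_right, Hds; auto. apply Rle_ge; auto.
    + destruct HS as [x0].
      assert (Hsup : sup_norm whole g = 1).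
      { apply Rle_antisym.
        - apply sup_le; [|lra]. intros x _. rewrite H1. lra.
        - unfold sup_norm. eapply le_lub with (M := 1).
          + exists x0. split; [exact I|]. now rewrite H1.
          + intros r (x & _ & ->). rewrite H1. lra. }
      split; auto. split; auto. exists (x0 :: nil). split; [discriminate|].
      intros x Hx. exfalso. apply Hx. unfold Mset. rewrite Hsup. auto.
    + assert (Eg : g = hP d P) by (apply functional_extensionality; auto).
      subst g. now apply hP_J.
Qed.
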